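(* Let $p\in\mathbb{R}_{\ge0}^n$ and $w\in\mathbb{R}_{\ge0}^n$ be arbitrary and let $t\ge0$. Then either $\Lambda(t)=\infty$ or there exists an index $i\in\{1,\ldots,n\}$ such that $\Lambda(t)=\Lambda^i(t)$.
   Context: Let $x^\star$ be a solution maximizing $p^{\mathsf T}x$ over $\{x\in\{0,1\}^n: w^{\mathsf T}x\le t\}$ (the winner), and let $\hat{x}$ be a solution minimizing $w^{\mathsf T}x$ over $\{x\in\{0,1\}^n: p^{\mathsf T}x>p^{\mathsf T}x^\star\}$ (the loser of smallest weight), with $\hat{x}=\perp$ if this set is empty. Define $\Lambda(t)=w^{\mathsf T}\hat{x}-t$ if $\hat{x}\ne\perp$ and $\Lambda(t)=\infty$ otherwise. For $i\in\{1,\ldots,n\}$ and $j\in\{0,1\}$ let $\mathcal{S}^{x_i=j}=\{x\in\{0,1\}^n: x_i=j\}$; let $x^{\star,i}$ maximize $p^{\mathsf T}x$ over $\{x\in\mathcal{S}^{x_i=0}: w^{\mathsf T}x\le t\}$, and let $\hat{x}^i$ minimize $w^{\mathsf T}x$ over $\{x\in\mathcal{S}^{x_i=1}: p^{\mathsf T}x>p^{\mathsf T}x^{\star,i}\}$, with $\hat{x}^i=\perp$ if this set is empty. Define $\Lambda^i(t)=w^{\mathsf T}\hat{x}^i-t$ if $\hat{x}^i\ne\perp$ and $\Lambda^i(t)=\infty$ otherwise. (These values do not depend on how ties in the argmax/argmin are broken.) *)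

(* Defs.v *)
From HB Require Import structures.
From mathcomp Require Import all_boot all_order all_algebra.
Set Implicit Arguments. Unset Strict Implicit. Unset Printing Implicit Defensive.
Import Order.TTheory GRing.Theory Num.Theory.
Local Open Scope ring_scope.

Section Knap.
Variables (R : realFieldType) (n : nat).

Notation bvec := {ffun 'I_n -> bool}.

Definition dotb (c : 'I_n -> R) (x : bvec) : R :=
  \sum_(i < n) (if x i then c i else 0).

Definition bzero : bvec := [ffun _ => false].

(* a maximizer of p^T x over the feasible set {x | P x, w^T x <= t};
   the all-zero vector is feasible whenever P bzero, w >= 0, t >= 0 *)
Definition winner (p w : 'I_n -> R) (t : R) (P : pred bvec) : bvec :=
  Order.arg_max bzero (fun x : bvec => P x && (dotb w x <= t)) (dotb p).

(* Lambda-value: w^T xhat - t where xhat minimizes w^T x over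
   {x | P x, p^T x > p^T xstar}; None encodes infinity (empty set). *)
Definition LambdaP (p w : 'I_n -> R) (t : R) (Pw Pl : pred bvec) : option R :=
  let ps := dotb p (winner p w t Pw) in
  match [pick x | Pl x && (ps < dotb p x)] with
  | Some x0 => Some (dotb w (Order.arg_min x0 (fun x : bvec => Pl x && (ps < dotb p x)) (dotb w)) - t)
  | None => None
  end.

Definition Lambda (p w : 'I_n -> R) (t : R) : option R :=
  LambdaP p w t predT predT.

Definition Lambda_i (p w : 'I_n -> R) (t : R) (i : 'I_n) : option R :=
  LambdaP p w t (fun x : bvec => ~~ x i) (fun x : bvec => x i).

End Knap.

(* Main.v *)
Require Import Defs.
From HB Require Import structures.
From mathcomp Require Import all_boot all_order all_algebra.
Import Order.TTheory GRing.Theory Num.Theory.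
Local Open Scope ring_scope.

Theorem lemma2p6 (R : realFieldType) (n : nat) (p w : 'I_n -> R) (t : R) :
  (forall i, 0 <= p i) -> (forall i, 0 <= w i) -> 0 <= t ->
  Lambda p w t = None \/ exists i : 'I_n, Lambda p w t = Lambda_i p w t i.
Proof.
move=> p0 w0 t0.
have d0 : forall c : 'I_n -> R, dotb c (bzero n) = 0.
  by move=> c; rewrite /dotb big1 // => i _; rewrite ffunE.
set xs := winner p w t predT.
have [Fxs Mxs] : dotb w xs <= t /\ forall y, dotb w y <= t -> dotb p y <= dotb p xs.
  rewrite /xs /winner; case: arg_maxP => [|z /= Hz Hm]; first by rewrite /= d0.
  by split => // y Hy; apply: Hm.
rewrite /Lambda /LambdaP -/xs.
case: pickP => [x0 Hx0|]; last by left.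
right.
set S := (fun x : {ffun 'I_n -> bool} => predT x && (dotb p xs < dotb p x)).
set a := Order.arg_min x0 S (dotb w).
have [Sa Ma] : S a /\ forall j, S j -> dotb w a <= dotb w j.
  by rewrite /a; case: arg_minP => // z Hz Hm; split => // j Hj; apply: Hm.
have [/existsP [i /andP [ai xsi]] | Hn] := boolP [exists i, a i && ~~ xs i]; last first.
  exfalso; move: Sa; rewrite /S /= ltNge; move/negP; apply.
  rewrite /dotb; apply: ler_sum => j _.
  case aj: (a j); last by case: (xs j).
  case xj: (xs j) => //.
  by move: Hn; rewrite negb_exists => /forallP /(_ j); rewrite aj xj.
exists i.
rewrite /Lambda_i /LambdaP.
set xi := winner p w t (fun x => ~~ x i).
have Exi : dotb p xi = dotb p xs.
  rewrite /xi /winner; case: arg_maxP => [|z /= /andP [Hz1 Hz2] Hm].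
    by rewrite /= d0 t0 ffunE.
  apply/eqP; rewrite eq_le Mxs //=.
  by apply: Hm; rewrite Fxs xsi.
rewrite Exi.
case: pickP => [y0 Hy0|]; last by move/(_ a); rewrite ai /=; move: Sa; rewrite /S /= => ->.
set S' := (fun x : {ffun 'I_n -> bool} => x i && (dotb p xs < dotb p x)).
set b := Order.arg_min y0 S' (dotb w).
have [Sb Mb] : S' b /\ forall j, S' j -> dotb w b <= dotb w j.
  by rewrite /b; case: arg_minP => // z Hz Hm; split => // j Hj; apply: Hm.
congr Some; congr (_ - _); apply/eqP; rewrite eq_le; apply/andP; split.
  by apply: Ma; move: Sb; rewrite /S' /S /= => /andP [].
by apply: Mb; rewrite /S' ai; move: Sa; rewrite /S.
Qed.
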